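(* Let $\mathbb{S}\in\mathbb{Z}^{N_X\times N_e}$, let $\mathbb{V}\in\mathbb{R}^{N_e\times N_z}$ be a matrix whose columns form a basis of $\mathrm{Ker}\,\mathbb{S}$, and let $\Psi^*_x$ be a dissipation function on $\mathbb{R}^{N_e}$ (for a fixed $x$). For a given $\zeta\in\mathrm{Im}\,\mathbb{V}^T=\mathbb{R}^{N_z}$, define $$f^\lozenge(x,\zeta):=\arg\min_{f\in\mathbb{R}^{N_e}}\Psi^*_x(f)\quad\text{subject to } \mathbb{V}^Tf=\zeta.$$ Then $f^\lozenge(x,\zeta)$ is a steady (zero-velocity) force: $j^\lozenge:=\nabla\Psi^*_x(f^\lozenge(x,\zeta))$ satisfies $\mathbb{S}j^\lozenge=0$.
   Context: A dissipation function on $\mathbb{R}^{N_e}$ is a strictly convex, continuously differentiable, $1$-coercive ($\psi(f)/\|f\|\to\infty$ as $\|f\|\to\infty$), even function $\psi$ with $\psi(0)=0$. Note $\mathrm{Ker}\,\mathbb{V}^T=\mathrm{Im}\,\mathbb{S}^T$ and $\mathrm{Im}\,\mathbb{V}=\mathrm{Ker}\,\mathbb{S}$. *)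

(* Defs.v *)
From HB Require Import structures.
From mathcomp Require Import all_boot all_order all_algebra.
From mathcomp Require Import all_classical all_reals all_analysis.
Set Implicit Arguments. Unset Strict Implicit. Unset Printing Implicit Defensive.
Import Order.TTheory GRing.Theory Num.Theory.
Import numFieldNormedType.Exports.
Local Open Scope ring_scope.

Section Dissipation.
Variables (R : realType) (n : nat).

Definition partial (psi : 'cV[R]_n -> R) (i : 'I_n) (x : 'cV[R]_n) : R :=
  'D_(delta_mx i 0) psi x.

Definition grad (psi : 'cV[R]_n -> R) (x : 'cV[R]_n) : 'cV[R]_n :=
  \col_i partial psi i x.

Definition strictly_convex (psi : 'cV[R]_n -> R) : Prop :=
  forall f g : 'cV[R]_n, f != g -> forall t : R, 0 < t -> t < 1 ->
    psi (t *: f + (1 - t) *: g) < t * psi f + (1 - t) * psi g.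

Definition C1 (psi : 'cV[R]_n -> R) : Prop :=
  (forall x, differentiable psi x) /\ (forall i, continuous (partial psi i)).

Definition coercive1 (psi : 'cV[R]_n -> R) : Prop :=
  forall M : R, exists r : R, forall f : 'cV[R]_n, r < `|f| -> M < psi f / `|f|.

Definition even_fun (psi : 'cV[R]_n -> R) : Prop := forall f, psi (- f) = psi f.

Definition dissipation_function (psi : 'cV[R]_n -> R) : Prop :=
  [/\ strictly_convex psi, C1 psi, coercive1 psi, even_fun psi & psi 0 = 0].

End Dissipation.

Definition is_argmin_constr (R : realType) (n m : nat) (psi : 'cV[R]_n -> R)
  (A : 'M[R]_(m, n)) (b : 'cV[R]_m) (f : 'cV[R]_n) : Prop :=
  A *m f = b /\ forall g : 'cV[R]_n, A *m g = b -> psi f <= psi g.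

(* Main.v *)
Require Import Defs.
From HB Require Import structures.
From mathcomp Require Import all_boot all_order all_algebra.
From mathcomp Require Import all_classical all_reals all_analysis.
Import Order.TTheory GRing.Theory Num.Theory.
Import numFieldNormedType.Exports.
Local Open Scope ring_scope.

Lemma dir0 (R : realType) n (psi : 'cV[R]_n -> R) (f hh : 'cV[R]_n) :
  (forall x, differentiable psi x) -> (forall t : R, psi f <= psi (t *: hh + f)) ->
  'D_hh psi f = 0.
Proof.
move=> Hd Hmin.
pose g := fun t : R => psi (t *: hh + f).
have eqf : forall t, (fun s : R => s^-1 *: ((g \o shift t) (s *: 1) - g t)) =
   (fun s => s^-1 *: ((psi \o shift (t *: hh + f)) (s *: hh) - psi (t *: hh + f))).
  move=> t; apply/funext => s /=; rewrite /g /=.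
  by rewrite [s *: 1]mulr1 scalerDl addrA.
have dg : forall t, derivable g t 1.
  by move=> t; rewrite /derivable eqf; exact: diff_derivable.
have H0 : is_derive (0:R) 1 g 0.
  apply: (@derive1_at_min _ g (-1) 1 0) => //.
  - by rewrite in_itv /= ltrN10 ltr01.
  - by move=> t _; rewrite /g scale0r add0r.
have := @derive_val _ _ _ _ _ _ _ H0.
by rewrite /derive eqf scale0r add0r.
Qed.

Lemma dir_sum (R : realType) n (psi : 'cV[R]_n -> R) (f hh : 'cV[R]_n) :
  (forall x, differentiable psi x) ->
  'D_hh psi f = \sum_i hh i 0 * grad psi f i 0.
Proof.
move=> Hd; rewrite deriveE //.
rewrite {1}(matrix_sum_delta hh) linear_sum; apply: eq_bigr => i _.
rewrite big_ord1 linearZ /= mxE /partial deriveE //.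
Qed.

Theorem mainTheorem11 (R : realType) (NX Ne Nz : nat)
  (S : 'M[int]_(NX, Ne)) (V : 'M[R]_(Ne, Nz))
  (* the columns of V form a basis of Ker S (S viewed as a real matrix) *)
  (HVfree : row_free V^T)
  (HVker : (V^T == kermx (map_mx (fun z : int => z%:~R) S)^T)%MS)
  (psi : 'cV[R]_Ne -> R) (Hpsi : dissipation_function psi)
  (zeta : 'cV[R]_Nz) (fdiam : 'cV[R]_Ne)
  (Hf : is_argmin_constr psi V^T zeta fdiam) :
  map_mx (fun z : int => z%:~R) S *m grad psi fdiam = 0.
Proof.
case: Hpsi => _ [Hd _] _ _ _.
case: Hf => Hz Hmin.
set S' := map_mx _ S.
set G := grad psi fdiam.
have HG : ((G^T) <= V^T)%MS.
  rewrite submxE; apply/eqP/matrixP => i j; rewrite !mxE.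
  set hh := col j (cokermx V^T).
  have Vh : V^T *m hh = 0.
    apply/matrixP=> a b; rewrite [RHS]mxE.
    have E := congr1 (fun M : 'M[R]_(Nz, Ne) => M a j) (mulmx_coker V^T).
    rewrite /= [RHS]mxE in E; rewrite -E.
    by rewrite !mxE; apply: eq_bigr => k _; rewrite !mxE.
  have Ht : forall t, V^T *m (t *: hh + fdiam) = zeta.
    by move=> t; rewrite mulmxDr -scalemxAr Vh scaler0 add0r.
  have := @dir0 _ _ psi fdiam hh Hd (fun t => Hmin _ (Ht t)).
  rewrite dir_sum // => H; transitivity (\sum_k hh k 0 * G k 0); last exact: H.
  apply: eq_bigr => k _; rewrite !mxE mulrC //.
have /submxP [D HD] := HG.
have HG' : G = V *m D^T by rewrite -[G]trmxK HD trmx_mul trmxK.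
case/andP: HVker => /sub_kermxP HK _.
have HSV : S' *m V = 0 by rewrite -[LHS]trmxK trmx_mul HK trmx0.
by rewrite HG' mulmxA HSV mul0mx.
Qed.
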